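(* Let $a,b\in\mathbb{R}$ satisfy $\frac13<a-b<\frac4{\pi^2}$ and $\frac2\pi-b<a\le\frac12$. Suppose moreover that $16ab(b-a)+(a+b)^2>0$ and that \[ x_1=\frac{(a+b)(2b-2a+1)-\sqrt{16ab(b-a)+(a+b)^2}}{2(a-b)^2}>0 . \] Then for all $x\in(0,1)$, \[ L(x)\le \arccos x\le \frac{(1+x_1)^{b+1/2}(1-x_1)^{1/2-a}}{a+b+(a-b)x_1}\cdot\frac{(1-x)^a}{(1+x)^b}, \] where $L(x)=\min\{2^{b+1/2},\frac{\pi}{2}\}\dfrac{(1-x)^a}{(1+x)^b}$ if $a=\frac12$, and $L(x)=0$ if $a<\frac12$.
   Context: $\arccos$ denotes the principal inverse cosine with values in $[0,\pi]$. *)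

(* Defs.v *)
From Stdlib Require Import Reals.
Open Scope R_scope.

Definition Lbound (a b x : R) : R :=
  if Req_EM_T a (1/2)
  then Rmin (Rpower 2 (b + 1/2)) (PI/2) * (Rpower (1 - x) a / Rpower (1 + x) b)
  else 0.

Definition x1_of (a b : R) : R :=
  ((a + b) * (2*b - 2*a + 1) - sqrt (16*a*b*(b - a) + (a + b)^2)) / (2 * (a - b)^2).

(* Main.v *)
Require Import Defs.
From Stdlib Require Import Reals Lra Psatz.
Open Scope R_scope.


Lemma dl_eq f x l l' : derivable_pt_lim f x l -> l = l' -> derivable_pt_lim f x l'.
Proof. intros H ->; exact H. Qed.

Lemma dl_plus f g x a b : derivable_pt_lim f x a -> derivable_pt_lim g x b ->
  derivable_pt_lim (fun t => f t + g t) x (a + b).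
Proof. intros. apply (derivable_pt_lim_plus f g); auto. Qed.
Lemma dl_minus f g x a b : derivable_pt_lim f x a -> derivable_pt_lim g x b ->
  derivable_pt_lim (fun t => f t - g t) x (a - b).
Proof. intros. apply (derivable_pt_lim_minus f g); auto. Qed.
Lemma dl_mult f g x a b : derivable_pt_lim f x a -> derivable_pt_lim g x b ->
  derivable_pt_lim (fun t => f t * g t) x (a * g x + f x * b).
Proof. intros. apply (derivable_pt_lim_mult f g); auto. Qed.
Lemma dl_const c x : derivable_pt_lim (fun _ => c) x 0.
Proof. apply (derivable_pt_lim_const c). Qed.
Lemma dl_id x : derivable_pt_lim (fun t => t) x 1.
Proof. apply derivable_pt_lim_id. Qed.
Lemma dl_scal c f x a : derivable_pt_lim f x a -> derivable_pt_lim (fun t => c * f t) x (c * a).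
Proof. intros H. eapply dl_eq. - apply (dl_mult (fun _ => c) f). apply dl_const. exact H. - simpl. ring. Qed.
Lemma dl_sin f x a : derivable_pt_lim f x a -> derivable_pt_lim (fun t => sin (f t)) x (cos (f x) * a).
Proof. intros H. apply (derivable_pt_lim_comp f sin); auto. apply derivable_pt_lim_sin. Qed.
Lemma dl_cos f x a : derivable_pt_lim f x a -> derivable_pt_lim (fun t => cos (f t)) x (- sin (f x) * a).
Proof. intros H. apply (derivable_pt_lim_comp f cos); auto. apply derivable_pt_lim_cos. Qed.
Lemma dl_ln f x a : derivable_pt_lim f x a -> 0 < f x -> derivable_pt_lim (fun t => ln (f t)) x (a / f x).
Proof. intros H P. eapply dl_eq. - apply (derivable_pt_lim_comp f ln). exact H. apply derivable_pt_lim_ln; auto.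
 - unfold Rdiv; ring. Qed.
Lemma dl_div f g x a b : derivable_pt_lim f x a -> derivable_pt_lim g x b -> g x <> 0 ->
  derivable_pt_lim (fun t => f t / g t) x ((a * g x - b * f x) / (g x)²).
Proof. intros. apply (derivable_pt_lim_div f g); auto. Qed.

Lemma dl_opp f x a : derivable_pt_lim f x a -> derivable_pt_lim (fun t => - f t) x (- a).
Proof. intros. apply (derivable_pt_lim_opp f); auto. Qed.
Ltac dtac := repeat first [ apply dl_minus | apply dl_plus | apply dl_opp | apply dl_scal | apply dl_mult | apply dl_sin | apply dl_cos | apply dl_id | apply dl_const ].

Definition gg a b t := sin t - t*(a+b) - (a-b)*(t*cos t).
Definition g1 a b t := cos t - (a+b) - (a-b)*(cos t - t*sin t).
Definition g2 a b t := - sin t + (a-b)*(2*sin t + t*cos t).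

Lemma d_gg a b t : derivable_pt_lim (gg a b) t (g1 a b t).
Proof. unfold gg, g1. eapply dl_eq. dtac. simpl. ring. Qed.
Lemma d_g1 a b t : derivable_pt_lim (g1 a b) t (g2 a b t).
Proof. unfold g2, g1. eapply dl_eq. dtac. simpl. ring. Qed.


Lemma cos_lb2 t : -PI/2 <= t <= PI/2 -> 1 - t^2/2 <= cos t.
Proof. intros H. destruct (cos_bound t 0) as [H1 _]; try lra.
  replace (1 - t^2/2) with (cos_approx t (2*0+1)); auto.
  unfold cos_approx, cos_term. simpl. field. Qed.

Lemma sin_le_x t : 0 <= t -> sin t <= t.
Proof. intros H. destruct (Req_dec t 0) as [->|]. rewrite sin_0; lra.
  left; apply sin_lt_x; lra. Qed.

Lemma sin_pos t : 0 < t -> t < PI -> 0 < sin t.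
Proof. intros; apply sin_gt_0; auto. Qed.

Lemma cos_lt1 t : 0 < t -> t < PI -> cos t < 1 /\ -1 < cos t.
Proof. intros. pose proof (sin_pos t H H0). pose proof (sin2_cos2 t). unfold Rsqr in *.
  split; nra. Qed.

Lemma tcot_decr s t : 0 < s -> s < t -> t < PI/2 ->
  t * cos t * sin s < s * cos s * sin t.
Proof.
  intros Hs Hst Ht. pose proof PI_RGT_0.
  set (f := fun u => u * cos u / sin u).
  set (f' := fun u => ((1 * cos u + u * (- sin u * 1)) * sin u - cos u * 1 * (u * cos u)) / (sin u)²).
  destruct (MVT_cor2 f f' s t) as [c [Hc Hc2]]; auto.
  { intros c Hc. unfold f, f'. assert (0 < sin c) by (apply sin_pos; lra). eapply dl_eq. apply dl_div. dtac. dtac. lra.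
    simpl. reflexivity. }
  assert (0 < sin c) by (apply sin_pos; lra).
  assert (0 < sin s) by (apply sin_pos; lra).
  assert (0 < sin t) by (apply sin_pos; lra).
  assert (f' c < 0).
  { unfold f'. apply Rdiv_neg_pos. 2: unfold Rsqr; nra.
    pose proof (sin2_cos2 c). unfold Rsqr in *.
    pose proof (sin_lt_x (2*c)). rewrite sin_2a in H4.
    nra. }
  assert (f t < f s) by nra.
  unfold f in H4. unfold Rdiv in H4.
  apply (Rmult_lt_compat_r (sin s * sin t)) in H4; [|nra].
  replace (t * cos t * / sin t * (sin s * sin t)) with (t * cos t * sin s) in H4 by (field; lra).
  replace (s * cos s * / sin s * (sin s * sin t)) with (s * cos s * sin t) in H4 by (field; lra).
  exact H4.
Qed.


Lemma SP2 a b c0 c : 0 < a - b -> 0 < c0 -> c0 < c -> c < PI/2 -> g2 a b c0 < 0 -> g2 a b c < 0.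
Proof.
  intros Hk H0 H1 H2 H. pose proof PI_RGT_0. unfold g2 in *.
  pose proof (tcot_decr c0 c H0 H1 H2).
  assert (0 < sin c0) by (apply sin_pos; lra).
  assert (0 < sin c) by (apply sin_pos; lra).
  set (k := a - b) in *.
  (* k c0 cos c0 < (1-2k) sin c0 *)
  assert (k * (c * cos c * sin c0) < k * (c0 * cos c0 * sin c)) by (apply Rmult_lt_compat_l; auto).
  assert (k * c0 * cos c0 * sin c < (1 - 2*k) * sin c0 * sin c) by nra.
  assert (k * c * cos c * sin c0 < (1 - 2*k) * sin c * sin c0) by nra.
  assert (k * c * cos c < (1 - 2*k) * sin c).
  { apply (Rmult_lt_reg_r (sin c0)); auto. }
  nra.
Qed.

Lemma SP1 a b s t : 0 < a - b -> 2*a <= 1 -> 0 < s -> s < t -> t < PI/2 -> g1 a b s < 0 -> g1 a b t < 0.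
Proof.
  intros Hk Ha H0 H1 H2 H. destruct (Rlt_or_le (g1 a b t) 0) as [|Hn]; auto. exfalso.
  destruct (MVT_cor2 (g1 a b) (g2 a b) 0 s) as [c0 [E0 I0]]; auto. intros; apply d_g1.
  destruct (MVT_cor2 (g1 a b) (g2 a b) s t) as [c [E I]]; auto. intros; apply d_g1.
  assert (g1 a b 0 = 1 - 2*a) by (unfold g1; rewrite cos_0, sin_0; ring).
  assert (g2 a b c0 < 0) by nra.
  assert (g2 a b c > 0) by nra.
  pose proof (SP2 a b c0 c Hk ltac:(lra) ltac:(lra) ltac:(lra) H4). lra.
Qed.

Lemma SP0 a b s t : 0 < a - b -> 2*a <= 1 -> 0 < s -> s < t -> t < PI/2 -> gg a b s < 0 -> gg a b t < 0.
Proof.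
  intros Hk Ha H0 H1 H2 H. destruct (Rlt_or_le (gg a b t) 0) as [|Hn]; auto. exfalso.
  destruct (MVT_cor2 (gg a b) (g1 a b) 0 s) as [c0 [E0 I0]]; auto. intros; apply d_gg.
  destruct (MVT_cor2 (gg a b) (g1 a b) s t) as [c [E I]]; auto. intros; apply d_gg.
  assert (gg a b 0 = 0) by (unfold gg; rewrite cos_0, sin_0; ring).
  assert (g1 a b c0 < 0) by nra.
  assert (g1 a b c > 0) by nra.
  pose proof (SP1 a b c0 c Hk Ha ltac:(lra) ltac:(lra) ltac:(lra) H4). lra.
Qed.

Definition dlt a b := Rmin 1 ((3*(a-b) - 1)/(a-b)).

Lemma g2_pos a b t : 1/3 < a - b -> a - b < 1/2 -> 0 < t -> t <= dlt a b -> 0 < g2 a b t.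
Proof.
  intros Hk1 Hk2 H0 H1. unfold dlt in H1. pose proof (Rmin_l 1 ((3*(a-b) - 1)/(a-b))).
  pose proof (Rmin_r 1 ((3*(a-b) - 1)/(a-b))).
  pose proof PI2_3_2.
  pose proof (cos_lb2 t ltac:(split; lra)). pose proof (sin_le_x t ltac:(lra)).
  set (k := a - b) in *.
  assert (t <= (3*k-1)/k) by lra.
  assert (k * t <= 3*k - 1).
  { assert (k * ((3*k-1)/k) = 3*k-1) by (field; lra).
    assert (k * t <= k * ((3*k-1)/k)) by (apply Rmult_le_compat_l; lra). lra. }
  unfold g2. fold k.
  assert (t^2 <= t) by nra.
  assert (- sin t * (1 - 2*k) >= - t * (1-2*k)) by nra.
  assert (k * t * cos t >= k * t * (1 - t^2/2)) by (apply Rle_ge, Rmult_le_compat_l; nra).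
  assert (k * t * t^2 <= (3*k-1) * t) by nra.
  nra.
Qed.

Lemma g1_pos a b t : 1/3 < a - b -> a - b < 1/2 -> 2*a <= 1 -> 0 < t -> t <= dlt a b -> 0 < g1 a b t.
Proof.
  intros. destruct (MVT_cor2 (g1 a b) (g2 a b) 0 t) as [c [E I]]; auto. intros; apply d_g1.
  assert (g1 a b 0 = 1 - 2*a) by (unfold g1; rewrite cos_0, sin_0; ring).
  pose proof (g2_pos a b c H H0 ltac:(lra) ltac:(lra)). nra.
Qed.

Lemma gg_pos a b t : 1/3 < a - b -> a - b < 1/2 -> 2*a <= 1 -> 0 < t -> t <= dlt a b -> 0 < gg a b t.
Proof.
  intros. destruct (MVT_cor2 (gg a b) (g1 a b) 0 t) as [c [E I]]; auto. intros; apply d_gg.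
  assert (gg a b 0 = 0) by (unfold gg; rewrite cos_0, sin_0; ring).
  pose proof (g1_pos a b c H H0 H1 ltac:(lra) ltac:(lra)). nra.
Qed.

Lemma dlt_pos a b : 1/3 < a - b -> 0 < dlt a b.
Proof. intros. unfold dlt. apply Rmin_pos. lra. apply Rdiv_lt_0_compat; lra. Qed.


Definition Phi a b t := ln t + b * ln (1 + cos t) - a * ln (1 - cos t).

Lemma d_Phi a b t : 0 < t < PI -> derivable_pt_lim (Phi a b) t (gg a b t / (t * sin t)).
Proof.
  intros Ht. destruct (cos_lt1 t ltac:(lra) ltac:(lra)) as [C1 C2].
  pose proof (sin_pos t ltac:(lra) ltac:(lra)) as S.
  unfold Phi. eapply dl_eq.
  apply dl_minus. apply dl_plus. apply (dl_ln (fun u => u)). apply dl_id. simpl; lra.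
  apply dl_scal. apply (dl_ln (fun u => 1 + cos u)). dtac. lra.
  apply dl_scal. apply (dl_ln (fun u => 1 - cos u)). dtac. lra.
  simpl. unfold gg.
  pose proof (sin2_cos2 t). unfold Rsqr in H.
  field_simplify_eq; [| repeat split; lra].
  replace (sin t ^ 2) with (1 - cos t ^ 2) by nra. ring.
Qed.

Definition psi a b x := (b+1/2)*ln(1+x) + (1/2-a)*ln(1-x) - ln(a+b+(a-b)*x).

Lemma Phi_psi_id a b t : 0 < t < PI/2 -> 0 < a + b -> 0 < a - b ->
  Phi a b t - psi a b (cos t) = ln (t * (a+b+(a-b)*cos t)) - ln (sin t) /\ 0 < t * (a+b+(a-b)*cos t) /\ 0 < sin t.
Proof.
  intros Ht Hv Hk. pose proof PI_RGT_0.
  destruct (cos_lt1 t ltac:(lra) ltac:(lra)) as [C1 C2].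
  pose proof (sin_pos t ltac:(lra) ltac:(lra)) as S.
  pose proof (cos_gt_0 t ltac:(lra) ltac:(lra)) as C.
  assert (P : 0 < a+b+(a-b)*cos t) by nra.
  assert (E : ln (1 + cos t) + ln (1 - cos t) = 2 * ln (sin t)).
  { rewrite <- ln_mult by lra. replace 2 with (INR 2) by (simpl; ring). rewrite <- ln_pow by lra.
    f_equal. pose proof (sin2_cos2 t). unfold Rsqr in H0. simpl. nra. }
  split; [|split; nra].
  unfold Phi, psi. rewrite ln_mult by lra. lra.
Qed.

Lemma Phi_gt_psi a b t : 0 < t < PI/2 -> 0 < a + b -> 0 < a - b ->
  Phi a b t > psi a b (cos t) -> gg a b t < 0.
Proof.
  intros Ht Hv Hk H. destruct (Phi_psi_id a b t Ht Hv Hk) as [E [P S]].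
  assert (ln (sin t) < ln (t * (a+b+(a-b)*cos t))) by lra.
  apply ln_lt_inv in H0; auto. unfold gg. nra.
Qed.

Lemma gg_pos_Phi a b t : 0 < t < PI/2 -> 0 < a + b -> 0 < a - b ->
  gg a b t > 0 -> Phi a b t < psi a b (cos t).
Proof.
  intros Ht Hv Hk H. destruct (Phi_psi_id a b t Ht Hv Hk) as [E [P S]].
  assert (t * (a+b+(a-b)*cos t) < sin t) by (unfold gg in H; nra).
  apply ln_increasing in H0; auto. lra.
Qed.


Lemma deriv_neg_left f c l lo : derivable_pt_lim f c l -> l < 0 -> lo < c ->
  exists y, lo < y < c /\ f c < f y.
Proof.
  intros H Hl Hlo. destruct (H (-l/2) ltac:(lra)) as [d Hd].
  pose proof (cond_pos d) as dp.
  set (h := - Rmin (d/2) ((c-lo)/2)).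
  assert (0 < Rmin (d/2) ((c-lo)/2)) by (apply Rmin_pos; lra).
  pose proof (Rmin_l (d/2) ((c-lo)/2)). pose proof (Rmin_r (d/2) ((c-lo)/2)).
  assert (hn : h < 0) by (unfold h; lra).
  specialize (Hd h ltac:(lra)).
  assert (Rabs h < d) by (rewrite Rabs_left; unfold h; lra).
  specialize (Hd H3). apply Rabs_def2 in Hd. destruct Hd as [Hd1 Hd2].
  assert ((f (c + h) - f c) / h < 0) by lra.
  exists (c + h). split. unfold h; lra.
  assert (f (c+h) - f c > 0).
  { destruct (Rle_or_lt (f (c+h) - f c) 0); auto.
    assert (0 <= (f (c + h) - f c) / h). 
    { replace ((f (c+h) - f c)/h) with ((-(f (c+h) - f c))/(-h)) by (field; lra).
      unfold Rdiv; apply Rmult_le_pos; [lra | left; apply Rinv_0_lt_compat; lra]. } lra. }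
  lra.
Qed.

Lemma Phi_cont a b u : 0 < u < PI -> continuity_pt (Phi a b) u.
Proof. intros. apply derivable_continuous_pt. exists (gg a b u / (u * sin u)). apply d_Phi; lra. Qed.

Lemma UB a b L : 1/3 < a - b -> a - b < 1/2 -> 2*a <= 1 -> 0 < a + b ->
  (forall x, 0 < x < 1 -> psi a b x <= L) ->
  forall t, 0 < t < PI/2 -> Phi a b t <= L.
Proof.
  intros Hk1 Hk2 Ha Hv Hpsi t0 Ht0. pose proof PI_RGT_0.
  assert (Hcos : forall u, 0 < u < PI/2 -> 0 < cos u < 1).
  { intros u Hu. split. apply cos_gt_0; lra. apply (cos_lt1 u); lra. }
  destruct (Rle_or_lt (Phi a b t0) L) as [|Hc]; auto. exfalso.
  set (tz := Rmin (dlt a b) (t0/2)).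
  pose proof (dlt_pos a b Hk1). pose proof (Rmin_l (dlt a b) (t0/2)). pose proof (Rmin_r (dlt a b) (t0/2)).
  assert (0 < tz) by (apply Rmin_pos; lra). fold tz in H1, H2.
  assert (Gz : 0 < gg a b tz) by (apply gg_pos; lra).
  assert (Pz : Phi a b tz < L).
  { pose proof (gg_pos_Phi a b tz ltac:(lra) Hv ltac:(lra) ltac:(lra)). pose proof (Hpsi (cos tz) (Hcos tz ltac:(lra))). lra. }
  destruct (continuity_ab_maj (Phi a b) tz t0 ltac:(lra)) as [c [Hmax Hc2]].
  { intros; apply Phi_cont; lra. }
  assert (Phi a b t0 <= Phi a b c) by (apply Hmax; lra).
  assert (tz < c) by (destruct (Req_dec c tz) as [->|]; lra).
  assert (Phi a b c > psi a b (cos c)) by (pose proof (Hpsi (cos c) (Hcos c ltac:(lra))); lra).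
  pose proof (Phi_gt_psi a b c ltac:(lra) Hv ltac:(lra) H6).
  assert (0 < sin c) by (apply sin_pos; lra).
  assert (gg a b c / (c * sin c) < 0) by (apply Rdiv_neg_pos; nra).
  destruct (deriv_neg_left (Phi a b) c _ tz (d_Phi a b c ltac:(lra)) H9 H5) as [y [Hy1 Hy2]].
  assert (Phi a b y <= Phi a b c) by (apply Hmax; lra). lra.
Qed.


Definition NN a b x := (a-b)^2*x^2 + (a+b)*(2*(a-b)-1)*x + (a+b)^2 - (a-b).

Lemma d_psi a b x : 0 < x < 1 -> 0 < a + b -> 0 < a - b ->
  derivable_pt_lim (psi a b) x (NN a b x / ((1 - x^2) * (a+b+(a-b)*x))).
Proof.
  intros Hx Hv Hk. assert (0 < a+b+(a-b)*x) by nra.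
  unfold psi. eapply dl_eq.
  apply dl_minus. apply dl_plus.
  apply dl_scal. apply (dl_ln (fun u => 1 + u)). dtac. lra.
  apply dl_scal. apply (dl_ln (fun u => 1 - u)). dtac. lra.
  apply (dl_ln (fun u => a + b + (a-b)*u)). dtac. lra.
  unfold NN. field. repeat split; nra.
Qed.

Lemma x1_facts a b : 1/3 < a - b -> a - b < 1/2 -> 2*a <= 1 -> 0 < a + b ->
  16*a*b*(b - a) + (a + b)^2 > 0 ->
  let x1 := x1_of a b in
  let x2 := ((a + b) * (2*b - 2*a + 1) + sqrt (16*a*b*(b - a) + (a + b)^2)) / (2 * (a - b)^2) in
  x1 < 1 /\ 1 <= x2 /\ x1 <= x2 /\ forall x, NN a b x = (a-b)^2 * (x - x1) * (x - x2).
Proof.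
  intros Hk1 Hk2 Ha Hv HD x1 x2.
  set (D := 16*a*b*(b - a) + (a + b)^2) in *.
  set (S := sqrt D) in *.
  assert (S0 : 0 <= S) by apply sqrt_pos.
  assert (SS : S * S = D) by (apply sqrt_sqrt; lra).
  assert (K : 0 < 2 * (a-b)^2) by nra.
  unfold x1, x1_of, x2. fold D. fold S.
  split; [|split; [|split]].
  - apply (Rmult_lt_reg_r (2*(a-b)^2)); auto. unfold Rdiv. rewrite Rmult_assoc, Rinv_l by lra.
    nra.
  - apply (Rmult_le_reg_r (2*(a-b)^2)); auto. unfold Rdiv. rewrite Rmult_assoc, Rinv_l by lra.
    set (W := 2*(a-b)^2 - (a+b)*(2*b-2*a+1)).
    assert (D - W*W = 8*(a-b)^2*a*(1-2*a)) by (unfold D, W; ring).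
    assert (0 <= 8*(a-b)^2*a*(1-2*a)) by (repeat apply Rmult_le_pos; nra).
    assert (W <= S) by (destruct (Rle_or_lt W S); auto; nra). unfold W in *. lra.
  - apply Rmult_le_compat_r. left; apply Rinv_0_lt_compat; auto. lra.
  - intros x. unfold NN. field_simplify_eq.
    replace (S^2) with D by (rewrite <- SS; ring). unfold D; ring. lra.
Qed.

Lemma psi_max a b : 1/3 < a - b -> a - b < 1/2 -> 2*a <= 1 -> 0 < a + b ->
  16*a*b*(b - a) + (a + b)^2 > 0 -> x1_of a b > 0 ->
  x1_of a b < 1 /\ forall x, 0 < x < 1 -> psi a b x <= psi a b (x1_of a b).
Proof.
  intros Hk1 Hk2 Ha Hv HD Hx1.
  destruct (x1_facts a b Hk1 Hk2 Ha Hv HD) as [L1 [L2 [L3 L4]]].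
  set (x1 := x1_of a b) in *.
  set (x2 := ((a + b) * (2*b - 2*a + 1) + sqrt (16*a*b*(b - a) + (a + b)^2)) / (2 * (a - b)^2)) in *.
  split; auto. intros x Hx.
  assert (Hd : forall c, 0 < c < 1 -> derivable_pt_lim (psi a b) c (NN a b c / ((1 - c^2) * (a+b+(a-b)*c)))).
  { intros; apply d_psi; lra. }
  assert (Hden : forall c, 0 < c < 1 -> 0 < (1 - c^2) * (a+b+(a-b)*c)) by (intros c Hc; apply Rmult_lt_0_compat; nra).
  destruct (Rtotal_order x x1) as [Hlt|[Heq|Hgt]].
  - destruct (MVT_cor2 (psi a b) (fun c => NN a b c / ((1 - c^2) * (a+b+(a-b)*c))) x x1 Hlt) as [c [E I]].
    { intros; apply Hd; lra. }
    assert (0 < NN a b c) by (rewrite L4; assert (0 < (a-b)^2) by nra; assert ((a-b)^2*(c-x1) < 0) by nra; nra).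
    assert (0 < NN a b c / ((1 - c^2) * (a+b+(a-b)*c))) by (apply Rdiv_lt_0_compat; auto; apply Hden; lra).
    nra.
  - rewrite Heq; lra.
  - destruct (MVT_cor2 (psi a b) (fun c => NN a b c / ((1 - c^2) * (a+b+(a-b)*c))) x1 x Hgt) as [c [E I]].
    { intros; apply Hd; lra. }
    assert (NN a b c < 0).
    { rewrite L4. assert (0 < (a-b)^2) by nra. assert (0 < (a-b)^2 * (c - x1)) by (apply Rmult_lt_0_compat; lra). nra. }
    assert (NN a b c / ((1 - c^2) * (a+b+(a-b)*c)) < 0) by (apply Rdiv_neg_pos; auto; apply Hden; lra).
    nra.
Qed.


Lemma ln_lb y : 0 < y -> 1 - / y <= ln y.
Proof. intros. pose proof (exp_ineq1_le (- ln y)). rewrite exp_Ropp, exp_ln in H0; lra. Qed.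

Lemma Phi_small b e : 0 <= b -> 0 < e <= 1 ->
  (b + 1/2) * ln 2 - b * e^2 / 2 <= Phi (1/2) b e.
Proof.
  intros Hb He. pose proof PI2_3_2.
  pose proof (cos_lb2 e ltac:(split; lra)) as C.
  destruct (cos_lt1 e ltac:(lra) ltac:(lra)) as [C1 C2].
  assert (A : ln 2 + ln (1 - cos e) <= 2 * ln e).
  { rewrite <- ln_mult by lra. replace (2 * ln e) with (ln (e * e)) by (rewrite ln_mult by lra; ring).
    destruct (Rle_lt_or_eq_dec (2 * (1 - cos e)) (e*e)) as [Hl|Hq]. nra.
    left; apply ln_increasing; lra. rewrite Hq; lra. }
  assert (B : ln 2 + ln (1 - e^2/4) <= ln (1 + cos e)).
  { rewrite <- ln_mult by nra.
    destruct (Rle_lt_or_eq_dec (2 * (1 - e^2/4)) (1 + cos e)) as [Hl|Hq]. nra.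
    left; apply ln_increasing; nra. rewrite Hq; lra. }
  pose proof (ln_lb (1 - e^2/4) ltac:(nra)) as L.
  assert (1 - / (1 - e^2/4) >= - e^2/2).
  { assert (/ (1 - e^2/4) <= 1 + e^2/2); [|lra].
    apply (Rmult_le_reg_r (1 - e^2/4)). nra. rewrite Rinv_l by (apply Rgt_not_eq; nra). assert (e^2 <= 1) by nra. assert (0 <= e^2) by nra. nra. }
  unfold Phi.
  assert (b * ln (1 + cos e) >= b * ln 2 - b * e^2/2) by nra.
  lra.
Qed.

Lemma LB b : 1/3 < 1/2 - b -> 0 <= b -> forall t, 0 < t < PI/2 ->
  ln (PI/2) <= Phi (1/2) b t \/ (b + 1/2) * ln 2 <= Phi (1/2) b t.
Proof.
  intros Hk Hb t Ht. pose proof PI_RGT_0.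
  assert (Hk' : 0 < 1/2 - b) by lra.
  destruct (Rlt_or_le (gg (1/2) b t) 0) as [Hg|Hg].
  - left. destruct (MVT_cor2 (Phi (1/2) b) (fun u => gg (1/2) b u / (u * sin u)) t (PI/2) ltac:(lra)) as [c [E I]].
    { intros; apply d_Phi; lra. }
    assert (gg (1/2) b c < 0) by (apply (SP0 (1/2) b t c); lra).
    assert (0 < sin c) by (apply sin_pos; lra).
    assert (gg (1/2) b c / (c * sin c) < 0) by (apply Rdiv_neg_pos; nra).
    assert (Phi (1/2) b (PI/2) = ln (PI/2)) by (unfold Phi; rewrite cos_PI2, Rplus_0_r, Rminus_0_r, ln_1; ring).
    nra.
  - right. destruct (Rle_or_lt ((b + 1/2) * ln 2) (Phi (1/2) b t)) as [|Hc]; auto. exfalso.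
    set (d := (b + 1/2) * ln 2 - Phi (1/2) b t).
    assert (0 < d) by (unfold d; lra).
    set (e := Rmin (Rmin 1 (t/2)) (d/(b+1))).
    assert (0 < e) by (apply Rmin_pos; [apply Rmin_pos|apply Rdiv_lt_0_compat]; lra).
    pose proof (Rmin_l (Rmin 1 (t/2)) (d/(b+1))). pose proof (Rmin_r (Rmin 1 (t/2)) (d/(b+1))).
    pose proof (Rmin_l 1 (t/2)). pose proof (Rmin_r 1 (t/2)). fold e in H2, H3.
    assert (Hmon : Phi (1/2) b e <= Phi (1/2) b t).
    { destruct (MVT_cor2 (Phi (1/2) b) (fun u => gg (1/2) b u / (u * sin u)) e t ltac:(lra)) as [c [E I]].
      { intros; apply d_Phi; lra. }
      assert (0 <= gg (1/2) b c).
      { destruct (Rlt_or_le (gg (1/2) b c) 0); auto. pose proof (SP0 (1/2) b c t ltac:(lra) ltac:(lra) ltac:(lra) ltac:(lra) ltac:(lra) H6). lra. }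
      assert (0 < sin c) by (apply sin_pos; lra).
      assert (0 <= gg (1/2) b c / (c * sin c)) by (unfold Rdiv; apply Rmult_le_pos; auto; left; apply Rinv_0_lt_compat; nra).
      nra. }
    pose proof (Phi_small b e Hb ltac:(lra)).
    assert (b * e^2/2 < d).
    { assert (e * (b + 1) <= d).
      { apply (Rmult_le_compat_r (b+1)) in H3; [|lra]. unfold Rdiv in H3. rewrite Rmult_assoc, Rinv_l in H3 by lra. lra. }
      nra. }
    unfold d in *. lra.
Qed.


Lemma ln_le_inv u v : 0 < u -> 0 < v -> ln u <= ln v -> u <= v.
Proof. intros Hu Hv H. destruct H. left; apply ln_lt_inv; auto. right; apply ln_inv; auto. Qed.

Lemma ln_le_mono u v : 0 < u -> u <= v -> ln u <= ln v.
Proof. intros Hu H. destruct H. left; apply ln_increasing; auto. subst; lra. Qed.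

Lemma Rpower_pos u e : 0 < Rpower u e.
Proof. unfold Rpower; apply exp_pos. Qed.

Lemma ln_frac m C D a b : 0 < m ->
  ln (m * (Rpower C a / Rpower D b)) = ln m + a * ln C - b * ln D.
Proof.
  intros Hm. pose proof (Rpower_pos C a). pose proof (Rpower_pos D b).
  unfold Rdiv. rewrite ln_mult, ln_mult, ln_Rinv, !ln_Rpower; auto.
  ring. apply Rinv_0_lt_compat; auto. apply Rmult_lt_0_compat; auto. apply Rinv_0_lt_compat; auto.
Qed.

Theorem theorem2 (a b : R)
  (h1 : 1/3 < a - b) (h2 : a - b < 4 / PI^2)
  (h3 : 2/PI - b < a) (h4 : a <= 1/2)
  (h5 : 16*a*b*(b - a) + (a + b)^2 > 0)
  (h6 : x1_of a b > 0) :
  forall x : R, 0 < x < 1 ->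
    Lbound a b x <= acos x /\
    acos x <= Rpower (1 + x1_of a b) (b + 1/2) * Rpower (1 - x1_of a b) (1/2 - a)
              / (a + b + (a - b) * x1_of a b)
              * (Rpower (1 - x) a / Rpower (1 + x) b).
Proof.
  intros x Hx. pose proof PI_RGT_0. pose proof PI_4.
  assert (HP : 2/PI * PI = 2) by (field; lra).
  assert (Hb : 0 < b) by nra.
  assert (Hv : 0 < a + b) by nra.
  assert (Hk2 : a - b < 1/2) by lra.
  assert (Ha : 2 * a <= 1) by lra.
  set (th := acos x).
  assert (Hth : 0 < th < PI/2).
  { destruct (acos_bound_lt x ltac:(lra)) as [T1 T2]. split; auto. fold th in T1, T2.
    destruct (Rlt_or_le th (PI/2)); auto. pose proof (cos_le_0 th H1 ltac:(lra)).
    unfold th in H2. rewrite cos_acos in H2; lra. }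
  assert (Hc : cos th = x) by (unfold th; apply cos_acos; lra).
  split.
  - unfold Lbound. destruct (Req_EM_T a (1/2)) as [E|E].
    + subst a.
      set (m := Rmin (Rpower 2 (b + 1/2)) (PI/2)).
      assert (Hm : 0 < m) by (apply Rmin_pos; [apply Rpower_pos | lra]).
      apply ln_le_inv. apply Rmult_lt_0_compat; auto. unfold Rdiv; apply Rmult_lt_0_compat; [apply Rpower_pos|apply Rinv_0_lt_compat, Rpower_pos].
      lra.
      rewrite ln_frac by auto.
      assert (L1 : ln m <= ln (PI/2)) by (apply ln_le_mono; auto; apply Rmin_r).
      assert (L2 : ln m <= (b + 1/2) * ln 2).
      { rewrite <- ln_Rpower. apply ln_le_mono; auto; apply Rmin_l. }
      pose proof (LB b ltac:(lra) ltac:(lra) th Hth) as HL.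
      unfold Phi in HL. rewrite Hc in HL. destruct HL; lra.
    + destruct (acos_bound x). fold th. lra.
  - destruct (psi_max a b h1 Hk2 Ha Hv h5 h6) as [X1 Hpsi].
    pose proof (UB a b (psi a b (x1_of a b)) h1 Hk2 Ha Hv) as U.
    assert (U' : Phi a b th <= psi a b (x1_of a b)).
    { apply U; auto. }
    set (x1 := x1_of a b) in *.
    assert (Hp : 0 < a + b + (a - b) * x1) by nra.
    assert (HM : 0 < Rpower (1 + x1) (b + 1/2) * Rpower (1 - x1) (1/2 - a) / (a + b + (a - b) * x1)).
    { unfold Rdiv. apply Rmult_lt_0_compat. apply Rmult_lt_0_compat; apply Rpower_pos. apply Rinv_0_lt_compat; auto. }
    apply ln_le_inv. lra. apply Rmult_lt_0_compat; auto. unfold Rdiv; apply Rmult_lt_0_compat; [apply Rpower_pos|apply Rinv_0_lt_compat, Rpower_pos].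
    rewrite ln_frac by auto.
    assert (ln (Rpower (1 + x1) (b + 1/2) * Rpower (1 - x1) (1/2 - a) / (a + b + (a - b) * x1)) = psi a b x1).
    { unfold Rdiv, psi. rewrite ln_mult, ln_mult, ln_Rinv, !ln_Rpower; auto; try apply Rpower_pos.
      all: try (apply Rmult_lt_0_compat; apply Rpower_pos); try (apply Rinv_0_lt_compat; auto). }
    rewrite H1. unfold Phi in U'. rewrite Hc in U'. lra.
Qed.
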